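(* For every integer $n\ge 1$, there is no tiling of the $3\times 3\times n$ box by bricks of size $1\times 2\times 2$.
   Context: A tiling of a $k\times m\times n$ box (made of $kmn$ unit cubes) by $a\times b\times c$ bricks is a partition of the box into non-overlapping axis-parallel boxes with integer corner coordinates, each congruent (by an axis-permuting placement) to the $a\times b\times c$ brick; all orientations are allowed. *)

(* Defs.v *)
From mathcomp Require Import all_boot.
From Stdlib Require List.
Set Implicit Arguments. Unset Strict Implicit. Unset Printing Implicit Defensive.

(* Unit cells are indexed by their minimal corner (i,j,l) in nat^3; the box
   k x m x n is the set of cells with i < k, j < m, l < n. *)
Definition cell := (nat * nat * nat)%type.

(* A placed brick: minimal corner (x,y,z) and side lengths (a,b,c) along the
   three axes; it occupies the cells [x,x+a) x [y,y+b) x [z,z+c). *)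
Record placed := Placed { px : nat; py : nat; pz : nat; la : nat; lb : nat; lc : nat }.

Definition in_brick (B : placed) (p : cell) : bool :=
  let: (i, j, l) := p in
  [&& px B <= i < px B + la B, py B <= j < py B + lb B & pz B <= l < pz B + lc B].

Definition in_box (k m n : nat) (p : cell) : bool :=
  let: (i, j, l) := p in [&& i < k, j < m & l < n].

Definition is_orientation (a b c : nat) (B : placed) : Prop :=
  perm_eq [:: la B; lb B; lc B] [:: a; b; c].

Definition tiling (k m n a b c : nat) (T : seq placed) : Prop :=
  (forall B, List.In B T -> is_orientation a b c B /\
       (forall p : cell, in_brick B p -> in_box k m n p)) /\
  (forall p : cell, in_box k m n p -> count (fun B => in_brick B p) T = 1).

Definition tileable (k m n a b c : nat) : Prop := exists T, tiling k m n a b c T.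

(* Main.v *)
Require Import Defs.
From mathcomp Require Import all_boot.
From Stdlib Require List.
From mathcomp Require Import zify.

Definition H (p : bool) (n : nat) (B : placed) : nat :=
  \sum_(i < 3) \sum_(j < 3) \sum_(l < n)
     ((odd (i + j) == p) * in_brick B (nat_of_ord i, nat_of_ord j, nat_of_ord l)).

Definition G (p : bool) (n : nat) (T : seq placed) : nat :=
  \sum_(i < 3) \sum_(j < 3) \sum_(l < n)
     ((odd (i + j) == p) * count (fun B => in_brick B (nat_of_ord i, nat_of_ord j, nat_of_ord l)) T).

Lemma Gcons p n B T : G p n (B :: T) = H p n B + G p n T.
Proof.
rewrite /G /H -big_split; apply: eq_bigr => i _.
rewrite -big_split; apply: eq_bigr => j _.
rewrite -big_split; apply: eq_bigr => l _.
by rewrite /= mulnDr.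
Qed.

Lemma S2 (x y a b : nat) :
  (a == 1) || (a == 2) -> (b == 1) || (b == 2) -> ~~ ((a == 1) && (b == 1)) ->
  x + a <= 3 -> y + b <= 3 ->
  \sum_(i < 3) \sum_(j < 3) ((odd (i + j) == false) * ((x <= i < x + a) && (y <= j < y + b)))
  = \sum_(i < 3) \sum_(j < 3) ((odd (i + j) == true) * ((x <= i < x + a) && (y <= j < y + b))).
Proof.
rewrite !big_ord_recl !big_ord0 /=.
move=> /orP [] /eqP -> /orP [] /eqP -> //= _;
  (case: x => [|[|[|x]]] //=; case: y => [|[|[|y]]] //=).
Qed.

Lemma Hgood n B : is_orientation 1 2 2 B ->
  (forall p : cell, in_brick B p -> in_box 3 3 n p) -> H false n B = H true n B.
Proof.
case: B => x y z a b c; rewrite /is_orientation /= => Hp Hc.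
have Ha : a \in [:: 1; 2; 2] by rewrite -(perm_mem Hp) inE eqxx.
have Hb : b \in [:: 1; 2; 2] by rewrite -(perm_mem Hp) !inE eqxx orbT.
have Hcc : c \in [:: 1; 2; 2] by rewrite -(perm_mem Hp) !inE eqxx !orbT.
have Hs := perm_sumn Hp.
have h12 : forall v, v \in [:: 1; 2; 2] -> (v == 1) || (v == 2).
  by move=> v; rewrite !inE; case: (v == 1); case: (v == 2).
move: Ha Hb Hcc => /h12 Ha /h12 Hb /h12 Hcc; rewrite /= in Hs.
have a0 : 0 < a by case/orP: Ha => /eqP ->.
have b0 : 0 < b by case/orP: Hb => /eqP ->.
have c0 : 0 < c by case/orP: Hcc => /eqP ->.
have /and3P [hx hy _] : [&& x + a.-1 < 3, y + b.-1 < 3 & z < n].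
  apply: (Hc (x + a.-1, y + b.-1, z)); rewrite /=; apply/and3P; split; lia.
have hx' : x + a <= 3 by rewrite -(prednK a0) addnS.
have hy' : y + b <= 3 by rewrite -(prednK b0) addnS.
have key : forall p, H p n (Placed x y z a b c) =
   (\sum_(i < 3) \sum_(j < 3) ((odd (i + j) == p) * ((x <= i < x + a) && (y <= j < y + b))))
   * \sum_(l < n) (z <= l < z + c).
  move=> p; rewrite /H big_distrl; apply: eq_bigr => i _.
  rewrite big_distrl; apply: eq_bigr => j _.
  rewrite big_distrr; apply: eq_bigr => l _ /=.
  by case: (x <= i < x + a); case: (y <= j < y + b); case: (z <= l < z + c); rewrite ?muln0 ?muln1.
rewrite !key S2 //.
- apply/negP => /andP [/eqP ea /eqP eb]; move: Hs Hcc; rewrite ea eb.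
  lia.
Qed.

Lemma Gbox p n T : (forall q : cell, in_box 3 3 n q -> count (fun B => in_brick B q) T = 1) ->
  G p n T = \sum_(i < 3) \sum_(j < 3) ((odd (i + j) == p) * n).
Proof.
move=> Hc; rewrite /G; apply: eq_bigr => i _; apply: eq_bigr => j _.
transitivity (\sum_(l < n) ((odd (i + j) == p) : nat)).
  by apply: eq_bigr => l _; rewrite Hc ?muln1 //= !ltn_ord.
by rewrite sum_nat_const card_ord mulnC.
Qed.

Theorem mainTheorem16 (n : nat) : 1 <= n -> ~ tileable 3 3 n 1 2 2.
Proof.
move=> n1 [T [Hb Hc]].
have E : G false n T = G true n T.
  elim: T Hb {Hc} => [|B T IH] Hb; first by rewrite /G; apply: eq_bigr => i _; apply: eq_bigr => j _; apply: eq_bigr => l _; rewrite /= !muln0.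
  rewrite !Gcons IH; last by move=> B' HB'; apply: Hb; right.
  have [o c] := Hb B (or_introl erefl).
  by rewrite (@Hgood n B o c).
move: E; rewrite !Gbox // !big_ord_recl !big_ord0 /=.
lia.
Qed.
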